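(* Every indecomposable coherent sheaf on $\operatorname{MSpec}(\langle t,t^{-1}\rangle)$ is of the form $\widetilde{N}$ where $N$ is isomorphic, as a $\langle t,t^{-1}\rangle$-module, either to $\langle t,t^{-1}\rangle$ itself or to $C_k=\{*,1,t,\dots,t^{k-1}\}$ for some integer $k\ge1$, on which $t$ acts by cyclically permuting $1\mapsto t\mapsto\dots\mapsto t^{k-1}\mapsto 1$ (the quotient of $\langle t,t^{-1}\rangle$ by the identification $t^k=1$, written $\langle t,t^{-1}\rangle/\langle t^k,t^{-k}\rangle$).
   Context: $\langle t,t^{-1}\rangle=\{0\}\cup\{t^n:n\in\mathbb Z\}$ is the infinite cyclic group with an absorbing zero adjoined. A module over a monoid $A$ (commutative, with $1$ and absorbing $0$) is a pointed set $(M,* )$ with an action satisfying $1m=m$, $a(bm)=(ab)m$, $0m=*$; it is finitely generated if finitely many elements generate it under the action. $\operatorname{MSpec}(A)$ is the space of prime ideals with the Zariski topology, and $\widetilde N$ is the sheaf with sections $N_f$ (localization at powers of $f$) on basic opens $D(f)$; coherent sheaves on $\operatorname{MSpec}(A)$ are exactly the $\widetilde N$ with $N$ finitely generated. A coherent sheaf is indecomposable if it is non-zero and is not a direct sum (sectionwise wedge sum) of two non-zero coherent sheaves. We denote $\mathcal{L}=\widetilde{\langle t,t^{-1}\rangle}$ and $\mathcal{C}_k=\widetilde{C_k}$. *)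

(* Defs.v *)
From Stdlib Require Import Arith ZArith Lia.

(* None = 0 (absorbing), Some n = t^n. *)
Definition A := option Z.
Definition azero : A := None.
Definition aone : A := Some 0%Z.
Definition amul (a b : A) : A :=
  match a, b with Some x, Some y => Some (x + y)%Z | _, _ => None end.
Fixpoint apow (f : A) (n : nat) : A :=
  match n with O => aone | S n => amul f (apow f n) end.

Lemma amulA a b c : amul a (amul b c) = amul (amul a b) c.
Proof. destruct a, b, c; simpl; f_equal; lia. Qed.

Record tmodule := TModule {
  car :> Type;
  pt : car;
  act : A -> car -> car;
  act1 : forall m, act aone m = m;
  actM : forall a b m, act a (act b m) = act (amul a b) m;
  act0 : forall m, act azero m = pt }.

Arguments pt {t}.
Arguments act {t}.

Definition fin_gen (N : tmodule) : Prop :=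
  exists s : list N, forall m : N,
    m = pt \/ exists (a : A) (g : N), List.In g s /\ m = act a g.

Definition mod_hom (N N' : tmodule) (phi : N -> N') : Prop :=
  phi pt = pt /\ forall a m, phi (act a m) = act a (phi m).

Definition mod_iso (N N' : tmodule) : Prop :=
  exists (phi : N -> N') (psi : N' -> N),
    mod_hom N N' phi /\ mod_hom N' N psi /\
    (forall m, psi (phi m) = m) /\ (forall m', phi (psi m') = m').

Definition Amod : tmodule.
Proof.
  refine (@TModule A azero amul _ _ _).
  - intros [m|]; simpl; auto.
  - intros; apply amulA.
  - reflexivity.
Defined.

(* C_k = {*, 1, t, ..., t^(k-1)}, t acting by cyclic permutation:
   t^n . t^i = t^((n+i) mod k);  0 . x = *. *)
Definition ck_elt (k : nat) := {i : nat | i < k}.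

Lemma ck_bound (k i : nat) (n : Z) :
  i < k -> Z.to_nat ((n + Z.of_nat i) mod Z.of_nat k) < k.
Proof.
  intro H. assert (Hk : (0 < Z.of_nat k)%Z) by lia.
  pose proof (Z.mod_pos_bound (n + Z.of_nat i) _ Hk). lia.
Qed.

Definition ck_act (k : nat) (a : A) (x : option (ck_elt k)) : option (ck_elt k) :=
  match a, x with
  | Some n, Some (exist _ i Hi) =>
      Some (exist _ (Z.to_nat ((n + Z.of_nat i) mod Z.of_nat k)) (ck_bound k i n Hi))
  | _, _ => None
  end.

Lemma ck_eq k (i j : nat) (Hi : i < k) (Hj : j < k) :
  i = j -> exist (fun x => x < k) i Hi = exist _ j Hj.
Proof. intros ->. f_equal. apply Peano_dec.le_unique. Qed.

Definition Cmod (k : nat) : tmodule.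
Proof.
  refine (@TModule (option (ck_elt k)) None (ck_act k) _ _ _).
  - intros [[i Hi]|]; simpl; auto. f_equal. apply ck_eq.
    rewrite Z.mod_small; lia.
  - intros [a|] [b|] [[i Hi]|]; simpl; auto. f_equal. apply ck_eq.
    assert (Hk : (0 < Z.of_nat k)%Z) by lia.
    pose proof (Z.mod_pos_bound (b + Z.of_nat i) _ Hk).
    rewrite Z2Nat.id by lia. rewrite Zplus_mod_idemp_r. do 2 f_equal. lia.
  - reflexivity.
Defined.

(* Sections over D(f) for every f : A, as setoids with point, A-action,
   and restriction maps D(f) -> D(g) whenever D(g) is contained in D(f),
   i.e. whenever g^n = f*h (the restriction is indexed by the witness (n,h)). *)
Record bsheaf := BSheaf {
  sec : A -> Type;
  seq : forall f, sec f -> sec f -> Prop;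
  spt : forall f, sec f;
  sact : forall f, A -> sec f -> sec f;
  sres : forall (f g : A) (n : nat) (h : A), sec f -> sec g }.

(* N~ : sections over D(f) are the localisation N_f = {m / f^a}, with
   m/f^a = m'/f^b iff f^c f^b m = f^c f^a m' for some c. *)
Definition tilde (N : tmodule) : bsheaf :=
  {| sec := fun _ => (N * nat)%type;
     seq := fun f x y =>
       exists c : nat,
         act (apow f (c + snd y)) (fst x) = act (apow f (c + snd x)) (fst y);
     spt := fun _ => (pt, 0);
     sact := fun _ a x => (act a (fst x), snd x);
     sres := fun f g n h x => (act (apow h (snd x)) (fst x), n * snd x) |}.

Definition wedge_seq (S T : bsheaf) (f : A) (x y : sec S f + sec T f) : Prop :=
  match x, y with
  | inl x, inl y => seq S f x y
  | inr x, inr y => seq T f x y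
  | inl x, inr y => seq S f x (spt S f) /\ seq T f y (spt T f)
  | inr x, inl y => seq T f x (spt T f) /\ seq S f y (spt S f)
  end.

Definition wedge (S T : bsheaf) : bsheaf :=
  {| sec := fun f => (sec S f + sec T f)%type;
     seq := wedge_seq S T;
     spt := fun f => inl (spt S f);
     sact := fun f a x => match x with
                          | inl x => inl (sact S f a x)
                          | inr x => inr (sact T f a x) end;
     sres := fun f g n h x => match x with
                          | inl x => inl (sres S f g n h x)
                          | inr x => inr (sres T f g n h x) end |}.

Definition bsheaf_hom (S T : bsheaf) (phi : forall f, sec S f -> sec T f) : Prop :=
  (forall f x y, seq S f x y -> seq T f (phi f x) (phi f y)) /\
  (forall f, seq T f (phi f (spt S f)) (spt T f)) /\
  (forall f a x, seq T f (phi f (sact S f a x)) (sact T f a (phi f x))) /\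
  (forall f g n h x, apow g n = amul f h ->
     seq T g (phi g (sres S f g n h x)) (sres T f g n h (phi f x))).

Definition bsheaf_iso (S T : bsheaf) : Prop :=
  exists (phi : forall f, sec S f -> sec T f) (psi : forall f, sec T f -> sec S f),
    bsheaf_hom S T phi /\ bsheaf_hom T S psi /\
    (forall f x, seq S f (psi f (phi f x)) x) /\
    (forall f y, seq T f (phi f (psi f y)) y).

Definition bsheaf_nonzero (S : bsheaf) : Prop :=
  exists f (x : sec S f), ~ seq S f x (spt S f).

Definition indecomposable_coh (N : tmodule) : Prop :=
  bsheaf_nonzero (tilde N) /\
  ~ (exists N1 N2 : tmodule, fin_gen N1 /\ fin_gen N2 /\
       bsheaf_nonzero (tilde N1) /\ bsheaf_nonzero (tilde N2) /\
       bsheaf_iso (tilde N) (wedge (tilde N1) (tilde N2))).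

(* Main.v *)
Require Import Defs.
From Stdlib Require Import Arith ZArith.
From Stdlib Require Import Arith ZArith Lia List ClassicalEpsilon ProofIrrelevance Classical.
Local Notation seq := Defs.seq.

Lemma act_None (N : tmodule) (m : N) : act None m = pt.
Proof. exact (act0 N m). Qed.

Lemma act_pt (N : tmodule) (a : A) : act a (@pt N) = pt.
Proof. rewrite <- (act0 N pt). rewrite actM. destruct a; reflexivity. Qed.

Lemma act_inv (N : tmodule) z (m : N) : act (Some (- z)%Z) (act (Some z) m) = m.
Proof. rewrite actM. simpl. replace (- z + z)%Z with 0%Z by lia. apply act1. Qed.

Lemma act_inv' (N : tmodule) z (m : N) : act (Some z) (act (Some (-z)%Z) m) = m.
Proof. rewrite actM. simpl. replace (z + - z)%Z with 0%Z by lia. apply act1. Qed.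

Lemma act_some_pt (N : tmodule) z (m : N) : act (Some z) m = pt -> m = pt.
Proof. intro H. rewrite <- (act_inv N z m), H. apply act_pt. Qed.

Lemma apow_some w n : apow (Some w) n = Some (Z.of_nat n * w)%Z.
Proof. induction n. reflexivity. cbn [apow]. rewrite IHn. unfold amul. f_equal. lia. Qed.

Lemma apow_add f n m : apow f (n + m) = amul (apow f n) (apow f m).
Proof.
  induction n; simpl.
  - destruct (apow f m); reflexivity.
  - rewrite IHn. apply amulA.
Qed.

Lemma tilde_refl (N : tmodule) f (x : N * nat) : seq (tilde N) f x x.
Proof. exists 0. reflexivity. Qed.

Lemma tilde_pt (N : tmodule) f a b : seq (tilde N) f (@pt N, a) (pt, b).
Proof. exists 0. simpl. rewrite !act_pt. reflexivity. Qed.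

Lemma tilde_None (N : tmodule) (x y : N * nat) : seq (tilde N) None x y.
Proof. exists 1. simpl. rewrite !act_None. reflexivity. Qed.

Lemma tilde_cross (N : tmodule) f (m m' : N) a b :
  seq (tilde N) f (m, a) (pt, 0) -> seq (tilde N) f (m', b) (pt, 0) ->
  seq (tilde N) f (m, a) (m', b).
Proof.
  intros [c Hc] [c' Hc']. simpl in *. rewrite act_pt in Hc, Hc'.
  exists (c + c'). simpl.
  replace (c + c' + b) with ((c' + b) + (c + 0)) by lia.
  replace (c + c' + a) with ((c + a) + (c' + 0)) by lia.
  rewrite (apow_add f (c' + b)), (apow_add f (c + a)), <- !actM, Hc, Hc', !act_pt. reflexivity.
Qed.

Definition subP (N : tmodule) (Q : N -> Prop) (m : N) := m = pt \/ Q m.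

Lemma subP_act (N : tmodule) (Q : N -> Prop)
  (HQ : forall z m, Q (act (Some z) m) <-> Q m) a m :
  subP N Q m -> subP N Q (act a m).
Proof.
  destruct a as [z|].
  - intros [-> | q]. left; apply act_pt. right; apply HQ; auto.
  - intros _. left. apply act_None.
Qed.

Lemma sig_eq (N : tmodule) (Q : N -> Prop) (x y : {m | subP N Q m}) :
  proj1_sig x = proj1_sig y -> x = y.
Proof. destruct x, y; simpl; intros ->; f_equal; apply proof_irrelevance. Qed.

Definition sub (N : tmodule) (Q : N -> Prop)
  (HQ : forall z m, Q (act (Some z) m) <-> Q m) : tmodule.
Proof.
  refine (@TModule {m | subP N Q m} (exist _ pt (or_introl eq_refl))
    (fun a x => exist _ (act a (proj1_sig x)) (subP_act N Q HQ a _ (proj2_sig x))) _ _ _).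
  - intros; apply sig_eq; simpl; apply act1.
  - intros; apply sig_eq; simpl; apply actM.
  - intros; apply sig_eq; simpl; apply act0.
Defined.

Lemma sub_seq_iff (N : tmodule) (Q : N -> Prop) (HQ : forall z m, Q (act (Some z) m) <-> Q m) f (s s' : sub N Q HQ) a b :
  seq (tilde (sub N Q HQ)) f (s, a) (s', b) <->
  seq (tilde N) f (proj1_sig s, a) (proj1_sig s', b).
Proof.
  split; intros [c Hc]; exists c; simpl in *.
  - apply (f_equal (@proj1_sig _ _)) in Hc. exact Hc.
  - apply sig_eq. exact Hc.
Qed.

Definition sproj (N : tmodule) (Q : N -> Prop) (HQ : forall z m, Q (act (Some z) m) <-> Q m) (m : N) : sub N Q HQ :=
  match excluded_middle_informative (subP N Q m) with
  | left p => exist _ m p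
  | right _ => @pt (sub N Q HQ) end.

Lemma sproj_val (N : tmodule) (Q : N -> Prop) (HQ : forall z m, Q (act (Some z) m) <-> Q m) m : subP N Q m -> proj1_sig (sproj N Q HQ m) = m.
Proof. unfold sproj. destruct excluded_middle_informative; simpl; tauto. Qed.

Definition orb (N : tmodule) (g : N) (m : N) : Prop := exists z, m = act (Some z) g.

Lemma orb_inv (N : tmodule) (g : N) z m : orb N g (act (Some z) m) <-> orb N g m.
Proof.
  split.
  - intros [w Hw]. exists (- z + w)%Z. rewrite <- (act_inv N z m), Hw, actM. reflexivity.
  - intros [w ->]. exists (z + w)%Z. rewrite actM. reflexivity.
Qed.

Definition Q2 (N : tmodule) (g : N) (m : N) : Prop := m <> pt /\ ~ orb N g m.

Lemma Q2_inv (N : tmodule) (g : N) z m : Q2 N g (act (Some z) m) <-> Q2 N g m.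
Proof.
  unfold Q2. rewrite orb_inv. split; intros [H1 H2]; split; auto.
  - intros ->. apply H1, act_pt.
  - intros H. apply H1. eapply act_some_pt; eauto.
Qed.

Definition N1 (N : tmodule) (g : N) := sub N (orb N g) (orb_inv N g).
Definition N2 (N : tmodule) (g : N) := sub N (Q2 N g) (Q2_inv N g).

Definition WT (N : tmodule) (g : N) := (N1 N g * nat + N2 N g * nat)%type.

Definition flat (N : tmodule) (g : N) (u : WT N g) : N * nat :=
  match u with
  | inl x => (proj1_sig (fst x), snd x)
  | inr x => (proj1_sig (fst x), snd x) end.

Definition isl (N : tmodule) (g : N) (u : WT N g) : bool :=
  match u with inl _ => true | inr _ => false end.

Definition phiD (N : tmodule) (g : N) (x : N * nat) : WT N g :=
  if excluded_middle_informative (orb N g (fst x))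
  then inl (sproj N (orb N g) (orb_inv N g) (fst x), snd x)
  else inr (sproj N (Q2 N g) (Q2_inv N g) (fst x), snd x).

Lemma flat_phi (N : tmodule) (g : N) x : flat N g (phiD N g x) = x.
Proof.
  destruct x as [m a]. unfold phiD; simpl.
  destruct excluded_middle_informative as [H|H]; simpl.
  - rewrite sproj_val. reflexivity. right; exact H.
  - rewrite sproj_val. reflexivity.
    destruct (classic (m = pt)). left; auto. right; split; auto.
Qed.

Lemma side_same (N : tmodule) (g : N) m m' a b :
  (orb N g m <-> orb N g m') -> isl N g (phiD N g (m, a)) = isl N g (phiD N g (m', b)).
Proof.
  intro H. unfold phiD; simpl.
  destruct excluded_middle_informative; destruct excluded_middle_informative;
    simpl; tauto.
Qed.

Lemma act_side (N : tmodule) (g : N) b m :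
  act b m = pt \/ (orb N g (act b m) <-> orb N g m).
Proof. destruct b as [z|]. right. apply orb_inv. left. apply act_None. Qed.

Lemma wll S T f x y : seq S f x y -> seq (wedge S T) f (inl x) (inl y).
Proof. exact (fun h => h). Qed.
Lemma wrr S T f x y : seq T f x y -> seq (wedge S T) f (inr x) (inr y).
Proof. exact (fun h => h). Qed.
Lemma wlr S T f x y : seq S f x (spt S f) /\ seq T f y (spt T f) -> seq (wedge S T) f (inl x) (inr y).
Proof. exact (fun h => h). Qed.
Lemma wrl S T f x y : seq T f x (spt T f) /\ seq S f y (spt S f) -> seq (wedge S T) f (inr x) (inl y).
Proof. exact (fun h => h). Qed.

Lemma W (N : tmodule) (g : N) f (u v : WT N g) :
  flat N g u = flat N g v -> (isl N g u = isl N g v \/ fst (flat N g u) = pt) ->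
  seq (wedge (tilde (N1 N g)) (tilde (N2 N g))) f u v.
Proof.
  destruct u as [[s a]|[s a]], v as [[s' b]|[s' b]]; intros E H; simpl in E, H;
    injection E; intros; subst.
  - apply wll. replace s' with s by (apply sig_eq; auto). apply tilde_refl.
  - destruct H as [H|H]; [discriminate|].
    apply wlr; split; apply sub_seq_iff; simpl; rewrite ?H; [| rewrite <- H1, H]; apply tilde_pt.
  - destruct H as [H|H]; [discriminate|].
    apply wrl; split; apply sub_seq_iff; simpl; rewrite ?H; [| rewrite <- H1, H]; apply tilde_pt.
  - apply wrr. replace s' with s by (apply sig_eq; auto). apply tilde_refl.
Qed.

Lemma subP2_of (N : tmodule) (g : N) m : ~ orb N g m -> subP N (Q2 N g) m.
Proof. intro H. destruct (classic (m = pt)). left; auto. right; split; auto. Qed.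

Lemma flat_sact (N : tmodule) (g : N) f a (u : WT N g) :
  flat N g (sact (wedge (tilde (N1 N g)) (tilde (N2 N g))) f a u) =
  (act a (fst (flat N g u)), snd (flat N g u)).
Proof. destruct u as [[s b]|[s b]]; reflexivity. Qed.

Lemma flat_sres (N : tmodule) (g : N) f g0 n h (u : WT N g) :
  flat N g (sres (wedge (tilde (N1 N g)) (tilde (N2 N g))) f g0 n h u) =
  (act (apow h (snd (flat N g u))) (fst (flat N g u)), n * snd (flat N g u)).
Proof. destruct u as [[s b]|[s b]]; reflexivity. Qed.

Lemma isl_sact (N : tmodule) (g : N) f a (u : WT N g) :
  isl N g (sact (wedge (tilde (N1 N g)) (tilde (N2 N g))) f a u) = isl N g u.
Proof. destruct u; reflexivity. Qed.

Lemma isl_sres (N : tmodule) (g : N) f g0 n h (u : WT N g) :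
  isl N g (sres (wedge (tilde (N1 N g)) (tilde (N2 N g))) f g0 n h u) = isl N g u.
Proof. destruct u; reflexivity. Qed.

Lemma wedge_None (N : tmodule) (g : N) (u v : WT N g) :
  seq (wedge (tilde (N1 N g)) (tilde (N2 N g))) None u v.
Proof.
  destruct u, v; [apply wll|apply wlr|apply wrl|apply wrr]; try split; apply tilde_None.
Qed.

Lemma decomp_iso (N : tmodule) (g : N) :
  bsheaf_iso (tilde N) (wedge (tilde (N1 N g)) (tilde (N2 N g))).
Proof.
  exists (fun f x => phiD N g x), (fun f u => flat N g u).
  split; [|split; [|split]].
  - split; [|split; [|split]].
    + intros f [m a] [m' b] H. destruct f as [w|].
      * assert (E : orb N g m <-> orb N g m').
        { destruct H as [c Hc]. simpl in Hc. rewrite !apow_some in Hc.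
          rewrite <- (orb_inv N g (Z.of_nat (c + b) * w) m), Hc, orb_inv. tauto. }
        unfold phiD; simpl.
        destruct excluded_middle_informative as [H1|H1];
          destruct excluded_middle_informative as [H2|H2]; try tauto.
        -- apply wll. apply sub_seq_iff. rewrite !sproj_val. exact H.
           right; auto. right; auto.
        -- apply wrr. apply sub_seq_iff. rewrite !sproj_val. exact H.
           apply subP2_of; auto. apply subP2_of; auto.
      * apply wedge_None.
    + intros f. apply W. rewrite flat_phi. reflexivity. right. rewrite flat_phi. reflexivity.
    + intros f a [m b]. apply W. rewrite flat_phi, flat_sact, flat_phi. reflexivity.
      destruct (act_side N g a m) as [E|E].
      * right. rewrite flat_phi. exact E.
      * left. rewrite isl_sact. apply side_same. exact E.
    + intros f g0 n h [m b] _. apply W. rewrite flat_phi, flat_sres, flat_phi. reflexivity.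
      destruct (act_side N g (apow h b) m) as [E|E].
      * right. rewrite flat_phi. exact E.
      * left. rewrite isl_sres. apply side_same. exact E.
  - split; [|split; [|split]].
    + intros f u v H.
      destruct u as [[s a]|[s a]], v as [[s' b]|[s' b]].
      * exact (proj1 (sub_seq_iff _ _ _ f s s' a b) H).
      * destruct H as [H1 H2]. apply tilde_cross.
        exact (proj1 (sub_seq_iff _ _ _ f s _ a 0) H1).
        exact (proj1 (sub_seq_iff _ _ _ f s' _ b 0) H2).
      * destruct H as [H1 H2]. apply tilde_cross.
        exact (proj1 (sub_seq_iff _ _ _ f s _ a 0) H1).
        exact (proj1 (sub_seq_iff _ _ _ f s' _ b 0) H2).
      * exact (proj1 (sub_seq_iff _ _ _ f s s' a b) H).
    + intros f. apply tilde_refl.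
    + intros f a u. rewrite flat_sact. apply tilde_refl.
    + intros f g0 n h u _. rewrite flat_sres. apply tilde_refl.
  - intros f x. rewrite flat_phi. apply tilde_refl.
  - intros f u. apply W. rewrite flat_phi; reflexivity.
    destruct u as [[s a]|[s a]]; destruct (proj2_sig s) as [Hp|Hq].
    + right. rewrite flat_phi. exact Hp.
    + left. unfold phiD; simpl. destruct excluded_middle_informative; simpl; tauto.
    + right. rewrite flat_phi. exact Hp.
    + left. unfold phiD; simpl. destruct excluded_middle_informative; simpl; try reflexivity.
      destruct Hq; tauto.
Qed.

Lemma nonzero_of (M : tmodule) (m : M) : m <> pt -> bsheaf_nonzero (tilde M).
Proof.
  intro H. exists (Some 0%Z), (m, 0). intros [c Hc]. simpl in Hc.
  rewrite !apow_some, act_pt in Hc. apply act_some_pt in Hc. auto.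
Qed.

Lemma orb_g (N : tmodule) (g : N) : orb N g g.
Proof. exists 0%Z. symmetry. apply (act1 N g). Qed.

Lemma fin_gen_N1 (N : tmodule) (g : N) : fin_gen (N1 N g).
Proof.
  exists (exist _ g (or_intror (orb_g N g)) :: nil). intro x.
  destruct (proj2_sig x) as [Hp|[z Hz]].
  - left. apply sig_eq. exact Hp.
  - right. exists (Some z), (exist _ g (or_intror (orb_g N g))). split.
    left; reflexivity. apply sig_eq. simpl. exact Hz.
Qed.

Lemma fin_gen_N2 (N : tmodule) (g : N) (s : list N) :
  (forall m : N, m = pt \/ exists (a : A) (g' : N), In g' s /\ m = act a g') ->
  fin_gen (N2 N g).
Proof.
  intro Hs. exists (map (sproj N (Q2 N g) (Q2_inv N g)) s). intro x.
  destruct (proj2_sig x) as [Hp|[Hnp Hno]].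
  - left. apply sig_eq. exact Hp.
  - destruct (Hs (proj1_sig x)) as [H|[a [g' [Hin Heq]]]]; [contradiction|].
    destruct a as [z|].
    2: { rewrite act_None in Heq; contradiction. }
    right. exists (Some z), (sproj N (Q2 N g) (Q2_inv N g) g'). split.
    + apply in_map; auto.
    + apply sig_eq. simpl. rewrite sproj_val. exact Heq.
      right. split.
      * intro E. subst. rewrite act_pt in Heq. contradiction.
      * intro E. apply Hno. rewrite Heq. apply orb_inv. auto.
Qed.

Lemma hom_tilde (M M' : tmodule) (phi : M -> M') :
  mod_hom M M' phi ->
  bsheaf_hom (tilde M) (tilde M') (fun f x => (phi (fst x), snd x)).
Proof.
  intros [H1 H2]. split; [|split; [|split]].
  - intros f [m a] [m' b] [c Hc]. exists c. simpl in *. rewrite <- !H2, Hc. reflexivity.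
  - intros f. exists 0. simpl. rewrite H1. reflexivity.
  - intros f a [m b]. exists 0. simpl. rewrite H2. reflexivity.
  - intros f g0 n h [m b] _. exists 0. simpl. rewrite H2. reflexivity.
Qed.

Lemma tilde_iso (M M' : tmodule) : mod_iso M M' -> bsheaf_iso (tilde M) (tilde M').
Proof.
  intros [phi [psi [Hphi [Hpsi [r1 r2]]]]].
  exists (fun f x => (phi (fst x), snd x)), (fun f x => (psi (fst x), snd x)).
  split; [apply hom_tilde; auto|split; [apply hom_tilde; auto|split]].
  - intros f [m a]. exists 0. simpl. rewrite r1. reflexivity.
  - intros f [m a]. exists 0. simpl. rewrite r2. reflexivity.
Qed.

Lemma mod_iso_refl (M : tmodule) : mod_iso M M.
Proof.
  exists (fun x => x), (fun x => x). unfold mod_hom. repeat split; auto.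
Qed.

Lemma mod_iso_sym (M M' : tmodule) : mod_iso M M' -> mod_iso M' M.
Proof. intros [phi [psi [H1 [H2 [H3 H4]]]]]. exists psi, phi. auto. Qed.

Lemma bij_iso (M M' : tmodule) (phi : M -> M') :
  mod_hom M M' phi -> (forall x y, phi x = phi y -> x = y) ->
  (forall y, exists x, phi x = y) -> mod_iso M M'.
Proof.
  intros [H1 H2] Hinj Hsur.
  pose (psi := fun y => proj1_sig (constructive_indefinite_description _ (Hsur y))).
  assert (Hps : forall y, phi (psi y) = y).
  { intro y. unfold psi. destruct constructive_indefinite_description; auto. }
  exists phi, psi. split; [split; auto|split; [split|split]].
  - apply Hinj. rewrite Hps, H1. reflexivity.
  - intros a m. apply Hinj. rewrite Hps, H2, Hps. reflexivity.
  - intro m. apply Hinj. apply Hps.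
  - exact Hps.
Qed.

Lemma act_diff (N : tmodule) (g : N) a b :
  act (Some a) g = act (Some b) g -> act (Some (a - b)%Z) g = g.
Proof.
  intro H. apply (f_equal (act (Some (- b)%Z))) in H. rewrite !actM in H. simpl in H.
  replace (- b + b)%Z with 0%Z in H by lia. change (Some 0%Z) with aone in H. rewrite (act1 N g) in H.
  replace (a - b)%Z with (- b + a)%Z by lia. exact H.
Qed.

Lemma min_exists (P : nat -> Prop) n : P n -> exists k, P k /\ forall j, j < k -> ~ P j.
Proof.
  induction n as [n IH] using lt_wf_ind. intro Pn.
  destruct (classic (exists j, j < n /\ P j)) as [[j [Hj Pj]]|H].
  - exact (IH j Hj Pj).
  - exists n. split; auto. intros j Hj Pj. apply H; eauto.
Qed.

Lemma act_add (N : tmodule) x y (m : N) : act (Some (x + y)%Z) m = act (Some x) (act (Some y) m).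
Proof. rewrite actM. reflexivity. Qed.

Lemma neg_fix (N : tmodule) (g : N) d : act (Some d) g = g -> act (Some (- d)%Z) g = g.
Proof.
  intro H. transitivity (act (Some (- d)%Z) (act (Some d) g)).
  rewrite H; reflexivity. apply act_inv.
Qed.

Lemma free_case (N : tmodule) (g : N) : g <> pt -> (forall m, m <> pt -> orb N g m) ->
  (forall n, act (Some n) g = g -> n = 0%Z) -> mod_iso Amod N.
Proof.
  intros Hg Horb Hfree. apply (bij_iso Amod N (fun b => act b g)).
  - split. apply act0. intros a m. rewrite actM. reflexivity.
  - intros [x|] [y|] H; cbv beta in H.
    + apply act_diff, Hfree in H. f_equal. lia.
    + rewrite act_None in H. apply act_some_pt in H. contradiction.
    + rewrite act_None in H. symmetry in H. apply act_some_pt in H. contradiction.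
    + reflexivity.
  - intro y. destruct (classic (y = pt)) as [->|H].
    + exists None. apply act_None.
    + destruct (Horb y H) as [z Hz]. exists (Some z). auto.
Qed.

Lemma per_case (N : tmodule) (g : N) (k : nat) : g <> pt ->
  (forall m, m <> pt -> orb N g m) -> 0 < k ->
  act (Some (Z.of_nat k)) g = g ->
  (forall j, j < k -> ~ (0 < j /\ act (Some (Z.of_nat j)) g = g)) ->
  mod_iso (Cmod k) N.
Proof.
  intros Hg Horb Hk Hper Hmin.
  assert (per_nat : forall n, act (Some (Z.of_nat k * Z.of_nat n)%Z) g = g).
  { induction n.
    - replace (Z.of_nat k * Z.of_nat 0)%Z with 0%Z by lia. apply (act1 N g).
    - replace (Z.of_nat k * Z.of_nat (S n))%Z with (Z.of_nat k + Z.of_nat k * Z.of_nat n)%Z by lia.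
      rewrite act_add, IHn. exact Hper. }
  assert (per : forall q, act (Some (Z.of_nat k * q)%Z) g = g).
  { intro q. destruct (Z_le_gt_dec 0 q).
    - rewrite <- (Z2Nat.id q) by lia. apply per_nat.
    - replace (Z.of_nat k * q)%Z with (- (Z.of_nat k * Z.of_nat (Z.to_nat (- q))))%Z
        by (rewrite Z2Nat.id; lia).
      apply neg_fix. apply per_nat. }
  assert (Hk0 : Z.of_nat k <> 0%Z) by lia.
  assert (modk : forall z, act (Some z) g = act (Some (z mod Z.of_nat k)%Z) g).
  { intro z. pose proof (Z.div_mod z (Z.of_nat k) Hk0) as E.
    transitivity (act (Some (z mod Z.of_nat k)%Z) (act (Some (Z.of_nat k * (z / Z.of_nat k)%Z)%Z) g)).
    - rewrite <- act_add. rewrite Z.add_comm, <- E. reflexivity.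
    - rewrite per. reflexivity. }
  assert (Hbd : forall z, (0 <= z mod Z.of_nat k < Z.of_nat k)%Z).
  { intro z. apply Z.mod_pos_bound. lia. }
  apply (bij_iso (Cmod k) N (fun x => match x with
     | None => pt | Some (exist _ i _) => act (Some (Z.of_nat i)) g end)).
  - split. reflexivity.
    intros [n|] [[i Hi]|]; simpl.
    + rewrite Z2Nat.id by (apply Hbd). rewrite <- act_add, <- modk. reflexivity.
    + symmetry; apply act_pt.
    + symmetry; apply act_None.
    + symmetry; apply act_None.
  - intros [[i Hi]|] [[j Hj]|] H.
    + apply act_diff in H. f_equal. apply ck_eq.
      destruct (lt_eq_lt_dec i j) as [[Hl|He]|Hl]; auto; exfalso.
      * apply (Hmin (j - i)). lia. split. lia.
        rewrite Nat2Z.inj_sub by lia.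
        replace (Z.of_nat j - Z.of_nat i)%Z with (- (Z.of_nat i - Z.of_nat j))%Z by lia.
        apply neg_fix; auto.
      * apply (Hmin (i - j)). lia. split. lia.
        rewrite Nat2Z.inj_sub by lia. exact H.
    + apply act_some_pt in H. contradiction.
    + symmetry in H. apply act_some_pt in H. contradiction.
    + reflexivity.
  - intro y. destruct (classic (y = pt)) as [->|H].
    + exists None. reflexivity.
    + destruct (Horb y H) as [z Hz].
      assert (Hlt : Z.to_nat (z mod Z.of_nat k)%Z < k).
      { pose proof (Hbd z). lia. }
      exists (Some (exist (fun x => x < k) _ Hlt)). cbv beta iota.
      rewrite Z2Nat.id by (apply Hbd). rewrite <- modk. auto.
Qed.

Theorem mainTheorem10 :
  forall N : tmodule, fin_gen N -> indecomposable_coh N ->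
    exists N' : tmodule,
      bsheaf_iso (tilde N) (tilde N') /\
      (mod_iso N' Amod \/ exists k : nat, 1 <= k /\ mod_iso N' (Cmod k)).
Proof.
  intros N [s Hs] [Hnz Hnd].
  assert (Hm : exists m : N, m <> pt).
  { destruct Hnz as [f [[m a] H]]. exists m. intro E. subst. apply H. apply tilde_pt. }
  destruct Hm as [m0 Hm0].
  destruct (Hs m0) as [E|[a [g [Hin Hg]]]]; [contradiction|].
  assert (Hgp : g <> pt).
  { intro E. subst. rewrite act_pt in Hm0. auto. }
  destruct (classic (forall m, m <> pt -> orb N g m)) as [Horb|Hno].
  2: { exfalso. apply not_all_ex_not in Hno. destruct Hno as [m1 Hm1].
       apply imply_to_and in Hm1. destruct Hm1 as [Hm1a Hm1b].
       apply Hnd. exists (N1 N g), (N2 N g).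
       split; [apply fin_gen_N1|split; [apply (fin_gen_N2 N g s Hs)|split; [|split]]].
       - apply (nonzero_of (N1 N g) (exist _ g (or_intror (orb_g N g)))).
         intro E. apply (f_equal (@proj1_sig _ _)) in E. auto.
       - apply (nonzero_of (N2 N g) (exist _ m1 (or_intror (conj Hm1a Hm1b)))).
         intro E. apply (f_equal (@proj1_sig _ _)) in E. auto.
       - apply decomp_iso. }
  destruct (classic (exists n, n <> 0%Z /\ act (Some n) g = g)) as [[n [Hn Hfix]]|Hfree].
  - assert (HP : 0 < Z.to_nat (Z.abs n) /\ act (Some (Z.of_nat (Z.to_nat (Z.abs n)))) g = g).
    { split. lia. rewrite Z2Nat.id by lia.
      destruct (Z_le_gt_dec 0 n).
      - rewrite Z.abs_eq by lia. auto.
      - rewrite Z.abs_neq by lia. apply neg_fix; auto. }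
    destruct (min_exists (fun j => 0 < j /\ act (Some (Z.of_nat j)) g = g) _ HP) as [k [[Hk Hkf] Hmin]].
    exists (Cmod k). split.
    + apply tilde_iso. apply mod_iso_sym. apply (per_case N g k); auto.
    + right. exists k. split. lia. apply mod_iso_refl.
  - exists Amod. split.
    + apply tilde_iso. apply mod_iso_sym. apply (free_case N g); auto.
      intros n Hn. destruct (Z.eq_dec n 0); auto. exfalso; apply Hfree; eauto.
    + left. apply mod_iso_refl.
Qed.
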